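(* If the TLFacP instance is non-degenerate, then for every $x\in S\cap\mathbb{R}^n$ the underlying undirected graph of the tangent digraph $\mathcal{G}(x)$ has no cycle.
   Context: $\mathbb{R}_{\max}=\mathbb{R}\cup\{-\infty\}$. Data: $A^\pm=(a^\pm_{i,j})\in\mathbb{R}_{\max}^{m\times n}$, $C=(c_{k,j})\in\mathbb{R}_{\max}^{p\times n}$; $A=(a_{i,j})$, $a_{i,j}=\max(a^+_{i,j},a^-_{i,j})$; $S=\{x:\max_j(a^+_{i,j}+x_j)\ge\max_j(a^-_{i,j}+x_j)\ \forall i\in[m]\}$. Tangent digraph $\mathcal{G}(x)$: vertices $U=\{u_1..u_p\}$, $V=[n]$, $W=\{w_1..w_m\}$; edges $E_1(x)=\{(u_k,j):\max_{j'}(c_{k,j'}+x_{j'})=c_{k,j}+x_j\}$, $E_2(x)=\{(w_i,j):\max_{j'}(a_{i,j'}+x_{j'})=a^-_{i,j}+x_j\}$, $E_3(x)=\{(j,w_i):\max_{j'}(a_{i,j'}+x_{j'})=a^+_{i,j}+x_j\}$. Non-degeneracy: let $Q\in\mathbb{R}_{\max}^{(p+m)\times n}$ be $C$ stacked above $A$; the tropical determinant of a square matrix $P$ is $\max_\sigma\sum_ip_{i,\sigma(i)}$ over permutations $\sigma$; $P$ is singular if at least two permutations attain the maximum; the instance is non-degenerate if no square submatrix of $Q$ with tropical determinant $\ne-\infty$ is singular. *)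

(* Defs.v *)
From HB Require Import structures.
From mathcomp Require Import all_boot all_order all_algebra fingroup perm.
From mathcomp Require Import reals.
Set Implicit Arguments.
Unset Strict Implicit.
Unset Printing Implicit Defensive.
Import Order.TTheory GRing.Theory Num.Theory.
Local Open Scope ring_scope.

(* R_max = R u {-oo}, represented as [option R] with [None] = -oo. *)
Section Tropical.
Variable R : realType.

Definition rmax := option R.

Definition tadd (a b : rmax) : rmax :=
  match a, b with
  | None, _ => b
  | _, None => a
  | Some x, Some y => Some (Num.max x y)
  end.

Definition tmul (a b : rmax) : rmax :=
  match a, b with
  | Some x, Some y => Some (x + y)
  | _, _ => None
  end.

Definition tle (a b : rmax) : bool :=
  match a, b with
  | None, _ => true
  | Some _, None => false
  | Some x, Some y => x <= y
  end.

Definition tsum (s : seq rmax) : rmax := foldr tadd None s.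
Definition tprod (s : seq rmax) : rmax := foldr tmul (Some 0) s.

Definition rowval {r n : nat} (M : 'M[rmax]_(r, n)) (i : 'I_r) (x : 'I_n -> R)
  : rmax := tsum [seq tmul (M i j) (Some (x j)) | j <- enum 'I_n].

Definition Amax {m n : nat} (Ap Am : 'M[rmax]_(m, n)) : 'M[rmax]_(m, n) :=
  \matrix_(i, j) tadd (Ap i j) (Am i j).

Definition inS {m n : nat} (Ap Am : 'M[rmax]_(m, n)) (x : 'I_n -> R) : Prop :=
  forall i : 'I_m, tle (rowval Am i x) (rowval Ap i x).

Definition perm_weight {k : nat} (P : 'M[rmax]_k) (s : 'S_k) : rmax :=
  tprod [seq P i (s i) | i <- enum 'I_k].
Definition tdet {k : nat} (P : 'M[rmax]_k) : rmax :=
  tsum [seq perm_weight P s | s <- enum [set: 'S_k]].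

Definition tsingular {k : nat} (P : 'M[rmax]_k) : Prop :=
  exists s1 s2 : 'S_k, s1 != s2 /\
    perm_weight P s1 = tdet P /\ perm_weight P s2 = tdet P.

Definition Qmat {p m n : nat} (C : 'M[rmax]_(p, n)) (Ap Am : 'M[rmax]_(m, n))
  : 'M[rmax]_(p + m, n) := col_mx C (Amax Ap Am).

(* A square k x k submatrix is given by injective row / column
   selections f, g (the order of rows/columns does not affect singularity). *)
Definition trop_nondegenerate {p m n : nat} (C : 'M[rmax]_(p, n))
  (Ap Am : 'M[rmax]_(m, n)) : Prop :=
  forall (k : nat) (f : 'I_k -> 'I_(p + m)) (g : 'I_k -> 'I_n),
    injective f -> injective g ->
    tdet (mxsub f g (Qmat C Ap Am)) <> None ->
    ~ tsingular (mxsub f g (Qmat C Ap Am)).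

(* Vertices of the tangent digraph:
   inl (inl k) = u_k (k < p), inl (inr j) = j in V = [n], inr i = w_i (i < m). *)
Definition tvert (p n m : nat) := ('I_p + 'I_n + 'I_m)%type.

Definition E1 {p n : nat} (C : 'M[rmax]_(p, n)) (x : 'I_n -> R) k j : bool :=
  (C k j != None) && (rowval C k x == tmul (C k j) (Some (x j))).
Definition E2 {m n : nat} (Ap Am : 'M[rmax]_(m, n)) (x : 'I_n -> R) i j : bool :=
  (Am i j != None) && (rowval (Amax Ap Am) i x == tmul (Am i j) (Some (x j))).
Definition E3 {m n : nat} (Ap Am : 'M[rmax]_(m, n)) (x : 'I_n -> R) j i : bool :=
  (Ap i j != None) && (rowval (Amax Ap Am) i x == tmul (Ap i j) (Some (x j))).

Definition tarc {p m n : nat} (C : 'M[rmax]_(p, n)) (Ap Am : 'M[rmax]_(m, n))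
  (x : 'I_n -> R) (a b : tvert p n m) : bool :=
  match a, b with
  | inl (inl k), inl (inr j) => E1 C x k j
  | inr i, inl (inr j) => E2 Ap Am x i j
  | inl (inr j), inr i => E3 Ap Am x j i
  | _, _ => false
  end.

Definition tadj {p m n : nat} (C : 'M[rmax]_(p, n)) (Ap Am : 'M[rmax]_(m, n))
  (x : 'I_n -> R) : rel (tvert p n m) :=
  fun a b => tarc C Ap Am x a b || tarc C Ap Am x b a.

Definition ug_acyclic {T : eqType} (e : rel T) : Prop :=
  ~ exists c : seq T, [/\ 3 <= size c, uniq c & path.cycle e c]%N.

End Tropical.

(* Main.v *)
Require Import Defs.
From HB Require Import structures.
From mathcomp Require Import all_boot all_order all_algebra fingroup perm.
From mathcomp Require Import reals zify.
Set Implicit Arguments.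
Unset Strict Implicit.
Unset Printing Implicit Defensive.
Import Order.TTheory GRing.Theory Num.Theory.
Local Open Scope ring_scope.

Section Aux.
Variable R : realType.
Implicit Types a b c : rmax R.

Lemma tle_refl a : tle a a.
Proof. by case: a => //= ?. Qed.

Lemma tle_trans a b c : tle a b -> tle b c -> tle a c.
Proof. by case: a => [x|] //; case: b => [y|] //; case: c => [z|] //= ; apply: le_trans. Qed.

Lemma tle_anti a b : tle a b -> tle b a -> a = b.
Proof.
case: a => [x|]; case: b => [y|] //= h1 h2.
by congr Some; apply/eqP; rewrite eq_le h1 h2.
Qed.

Lemma tle_taddl a b : tle a (tadd a b).
Proof. by case: a => [x|]; case: b => [y|] //=; rewrite ?le_max ?lexx. Qed.

Lemma tle_taddr a b : tle b (tadd a b).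
Proof. by case: a => [x|]; case: b => [y|] //=; rewrite ?le_max ?lexx ?orbT. Qed.

Lemma tadd_le a b c : tle a c -> tle b c -> tle (tadd a b) c.
Proof. by case: a => [x|]; case: b => [y|] //; case: c => [z|] //= h1 h2; rewrite ge_max h1 h2. Qed.

Lemma tle_tmul a b y : tle a b -> tle (tmul a (Some y)) (tmul b (Some y)).
Proof. by case: a => [x|]; case: b => [z|] //= h; rewrite lerD2r. Qed.

Lemma tle_tsum a s : a \in s -> tle a (tsum s).
Proof.
elim: s => //= b s IH; rewrite in_cons => /orP [/eqP -> | /IH h].
  exact: tle_taddl.
exact: tle_trans h (tle_taddr _ _).
Qed.

Lemma tsum_le s c : (forall a, a \in s -> tle a c) -> tle (tsum s) c.
Proof.
elim: s => [|b s IH] h /=; first by case: c {h}.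
apply: tadd_le; first by apply: h; rewrite mem_head.
by apply: IH => a ha; apply: h; rewrite in_cons ha orbT.
Qed.

Lemma tprod_le (I : Type) (F : I -> rmax R) (G : I -> R) (s : seq I) :
  (forall i, tle (F i) (Some (G i))) ->
  tle (tprod (map F s)) (Some (\sum_(i <- s) G i)).
Proof.
move=> h; elim: s => [|i s IH] /=; first by rewrite big_nil.
rewrite big_cons; move: (h i) IH; case: (F i) => [u|] //.
case: (tprod _) => [v|] //= h1 h2; exact: lerD.
Qed.

Lemma tprod_eq (I : Type) (F : I -> rmax R) (G : I -> R) (s : seq I) :
  (forall i, F i = Some (G i)) ->
  tprod (map F s) = Some (\sum_(i <- s) G i).
Proof.
move=> h; elim: s => [|i s IH] /=; first by rewrite big_nil.
by rewrite big_cons h IH.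
Qed.

Section Core.
Variables (N n : nat) (Q : 'M[rmax R]_(N, n)) (x : 'I_n -> R) (M : 'I_N -> R).
Hypothesis Hub : forall r j, tle (tmul (Q r j) (Some (x j))) (Some (M r)).

Lemma core k (f : 'I_k -> 'I_N) (g : 'I_k -> 'I_n) (s : 'S_k) : s != 1%g ->
  (forall t, Q (f t) (g t) = Some (M (f t) - x (g t))) ->
  (forall t, Q (f t) (g (s t)) = Some (M (f t) - x (g (s t)))) ->
  tdet (mxsub f g Q) <> None /\ tsingular (mxsub f g Q).
Proof.
move=> s1 h1 h2.
set W := \sum_t M (f t) - \sum_t x (g t).
have sumE : forall s' : 'S_k, \sum_(i <- enum 'I_k) (M (f i) - x (g (s' i))) = W.
  move=> s'; rewrite big_enum /= sumrB; congr (_ - _).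
  by rewrite [RHS](reindex_inj (@perm_inj _ s')).
have ub : forall s' : 'S_k, tle (perm_weight (mxsub f g Q) s') (Some W).
  move=> s'; rewrite /perm_weight -(sumE s').
  apply: tprod_le => i; rewrite mxE.
  move: (Hub (f i) (g (s' i))); case: (Q _ _) => [q|] //= h.
  by rewrite lerBrDr.
have eqW : forall s' : 'S_k, (forall t, Q (f t) (g (s' t)) = Some (M (f t) - x (g (s' t)))) ->
    perm_weight (mxsub f g Q) s' = Some W.
  move=> s' h; rewrite /perm_weight -(sumE s'); apply: tprod_eq => i.
  by rewrite mxE h.
have w1 : perm_weight (mxsub f g Q) 1%g = Some W by apply: eqW => t; rewrite perm1.
have w2 : perm_weight (mxsub f g Q) s = Some W by apply: eqW.
have dt : tdet (mxsub f g Q) = Some W.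
  apply: tle_anti.
    by apply: tsum_le => a /mapP [s' _ ->]; apply: ub.
  rewrite -w1; apply: tle_tsum; apply: map_f; by rewrite mem_enum in_setT.
split; first by rewrite dt.
exists 1%g, s; split; first by rewrite eq_sym.
by rewrite dt.
Qed.
End Core.
End Aux.

Section Extract.
Variable R : realType.
Variables (T : eqType) (e : rel T) (isCol : T -> bool) (N n : nat)
  (rowof : T -> 'I_N) (colof : T -> 'I_n) (Q : 'M[rmax R]_(N, n))
  (x : 'I_n -> R) (M : 'I_N -> R).
Hypothesis Halt : forall a b, e a b -> isCol a != isCol b.
Hypothesis Hsym : forall a b, e a b -> e b a.
Hypothesis Htight : forall a b, e a b -> isCol a ->
  Q (rowof b) (colof a) = Some (M (rowof b) - x (colof a)).
Hypothesis Hcinj : forall a b, isCol a -> isCol b -> colof a = colof b -> a = b.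
Hypothesis Hrinj : forall a b, ~~ isCol a -> ~~ isCol b -> rowof a = rowof b -> a = b.

Lemma extract c v0 : uniq c -> (3 <= size c)%N -> path.cycle e c ->
  isCol (nth v0 c 0) ->
  exists k (f : 'I_k -> 'I_N) (g : 'I_k -> 'I_n) (s : 'S_k),
    [/\ injective f, injective g, s != 1%g,
        forall t, Q (f t) (g t) = Some (M (f t) - x (g t)) &
        forall t, Q (f t) (g (s t)) = Some (M (f t) - x (g (s t)))].
Proof.
move=> uc sc cc c0.
set L := size c.
pose a i := nth v0 c i.
have edge : forall i, (i.+1 < L)%N -> e (a i) (a i.+1).
  move=> i hi; move: cc; rewrite (cycle_path v0) => /(pathP v0) h.
  by have := h i.+1 hi.
have clos : e (a L.-1) (a 0).
  move: cc; rewrite (cycle_path v0) => /(pathP v0) h.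
  have := h 0%N; rewrite /a /L nth_last /=; apply; lia.
have par : forall i, (i < L)%N -> isCol (a i) = ~~ odd i.
  elim=> [|i IH] hi; first by [].
  have := Halt (edge i hi); rewrite IH; last lia.
  by rewrite /=; case: (isCol _); case: (odd i).
have oddL : odd L = false.
  have := Halt clos; rewrite (par L.-1) ?c0; last lia.
  move=> h; rewrite (_ : L = L.-1.+1); last lia.
  by move: h; rewrite /=; case: (odd _).
set k := L./2.
have HL : L = (2 * k)%N.
  by have := odd_double_half L; rewrite oddL add0n -mul2n => ->.
have k2 : (2 <= k)%N by lia.
pose g (t : 'I_k) := colof (a (2 * t)%N).
pose f (t : 'I_k) := rowof (a (2 * t).+1).
pose s : 'S_k := perm (can_inj (@ordSK k)).
have auniq : forall i j, (i < L)%N -> (j < L)%N -> a i = a j -> i = j.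
  by move=> i j hi hj /eqP; rewrite /a nth_uniq // => /eqP.
exists k, f, g, s; split.
- move=> t1 t2; have := ltn_ord t1; have := ltn_ord t2 => b2 b1 /Hrinj; rewrite !par; try lia.
  rewrite /= !oddM /= => /(_ isT isT) /auniq h.
  apply: val_inj; have : (2 * t1).+1 = (2 * t2).+1 by apply: h; have := ltn_ord t1; have := ltn_ord t2; lia.
  rewrite /=; lia.
- move=> t1 t2; have := ltn_ord t1; have := ltn_ord t2 => b2 b1 /Hcinj; rewrite !par; try lia.
  rewrite /= !oddM /= => /(_ isT isT) /auniq h.
  apply: val_inj; have : (2 * t1)%N = (2 * t2)%N by apply: h; have := ltn_ord t1; have := ltn_ord t2; lia.
  rewrite /=; lia.
- have k0 : (0 < k)%N by lia.
  apply/eqP => /(congr1 (fun s : 'S_k => val (s (Ordinal k0)))).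
  rewrite permE perm1 /= modn_small //; lia.
- move=> t; have ht := ltn_ord t; apply: Htight; first by apply: edge; lia.
  by rewrite par /= ?oddM //; lia.
- move=> t; have ht := ltn_ord t; rewrite /g permE /=.
  have [lt|ge] := ltnP t.+1 k.
    rewrite modn_small //; rewrite mulnS.
    apply: Htight; first by apply: Hsym; apply: (edge (2 * t).+1); lia.
    by rewrite par /= ?oddM //; lia.
  have tk : t.+1 = k by have := ltn_ord t; lia.
  rewrite tk modnn muln0.
  have -> : f t = rowof (a L.-1) by rewrite /f; congr (rowof (a _)); lia.
  apply: Htight; first by apply: Hsym.
  by rewrite par //; lia.
Qed.
End Extract.

Section Main.
Variable R : realType.
Variables (p m n : nat) (C : 'M[rmax R]_(p, n)) (Ap Am : 'M[rmax R]_(m, n)) (x : 'I_n -> R).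

Definition isColv (v : tvert p n m) : bool :=
  match v with inl (inr _) => true | _ => false end.
Definition colofv (j0 : 'I_n) (v : tvert p n m) : 'I_n :=
  match v with inl (inr j) => j | _ => j0 end.
Definition rowofv (r0 : 'I_(p + m)) (v : tvert p n m) : 'I_(p + m) :=
  match v with inl (inl k) => lshift m k | inr i => rshift p i | _ => r0 end.

Let Q := Qmat C Ap Am.
Let M r := odflt 0 (rowval Q r x).

Lemma Hub r j : tle (tmul (Q r j) (Some (x j))) (Some (M r)).
Proof.
have h : tle (tmul (Q r j) (Some (x j))) (rowval Q r x).
  by apply: tle_tsum; apply: map_f; rewrite mem_enum.
rewrite /M; move: h; case: (rowval Q r x) => [v|] //=.
by case: (tmul _ _).
Qed.

Lemma tight_of r j q : tle (Some q) (Q r j) -> rowval Q r x = Some (q + x j) ->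
  Q r j = Some (M r - x j).
Proof.
move=> h1 h2.
have h3 : tle (tmul (Q r j) (Some (x j))) (rowval Q r x).
  by apply: tle_tsum; apply: map_f; rewrite mem_enum.
rewrite /M h2 /= addrK.
move: h1 h3; rewrite h2; case: (Q r j) => [q'|] //= h1 h3.
rewrite lerD2r in h3; congr Some; apply/eqP; by rewrite eq_le h1 h3.
Qed.

Lemma rowvalU k : rowval Q (lshift m k) x = rowval C k x.
Proof. by rewrite /rowval; congr tsum; apply: eq_map => j; rewrite /Q /Qmat col_mxEu. Qed.

Lemma rowvalD i : rowval Q (rshift p i) x = rowval (Amax Ap Am) i x.
Proof. by rewrite /rowval; congr tsum; apply: eq_map => j; rewrite /Q /Qmat col_mxEd. Qed.

Lemma Halt a b : tadj C Ap Am x a b -> isColv a != isColv b.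
Proof. by case: a => [[?|?]|?]; case: b => [[?|?]|?]; rewrite /tadj /=. Qed.

Lemma Hsym a b : tadj C Ap Am x a b -> tadj C Ap Am x b a.
Proof. by rewrite /tadj orbC. Qed.

Lemma Htight r0 j0 a b : tadj C Ap Am x a b -> isColv a ->
  Q (rowofv r0 b) (colofv j0 a) = Some (M (rowofv r0 b) - x (colofv j0 a)).
Proof.
case: a => [[?|j]|?] //; case: b => [[k|?]|i]; rewrite /tadj /= ?orbF //= => h _.
- move: h; rewrite /E1 => /andP [].
  case E: (C k j) => [c|] // _ /eqP h.
  apply: (tight_of (q := c)); first by rewrite /Q /Qmat col_mxEu E /= lexx.
  by rewrite rowvalU h.
- case/orP: h.
  + rewrite /E3 => /andP []; case E: (Ap i j) => [c|] // _ /eqP h.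
    apply: (tight_of (q := c)).
      by rewrite /Q /Qmat col_mxEd /Amax mxE -[X in tle X _]E tle_taddl.
    by rewrite rowvalD h.
  + rewrite /E2 => /andP []; case E: (Am i j) => [c|] // _ /eqP h.
    apply: (tight_of (q := c)).
      by rewrite /Q /Qmat col_mxEd /Amax mxE -[X in tle X _]E tle_taddr.
    by rewrite rowvalD h.
Qed.

Lemma Hcinj j0 a b : isColv a -> isColv b -> colofv j0 a = colofv j0 b -> a = b.
Proof. by case: a => [[?|?]|?]; case: b => [[?|?]|?] //= _ _ ->. Qed.

Lemma Hrinj r0 a b : ~~ isColv a -> ~~ isColv b -> rowofv r0 a = rowofv r0 b -> a = b.
Proof.
case: a => [[k1|?]|i1]; case: b => [[k2|?]|i2] //= _ _ /(congr1 val) /= h.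
- by congr (inl (inl _)); apply: val_inj.
- have := ltn_ord k1; lia.
- have := ltn_ord k2; lia.
- by congr inr; apply: val_inj => /=; lia.
Qed.

End Main.

Theorem proposition5p1 (R : realType) (p m n : nat)
  (C : 'M[rmax R]_(p, n)) (Ap Am : 'M[rmax R]_(m, n)) :
  trop_nondegenerate C Ap Am ->
  forall x : 'I_n -> R, inS Ap Am x -> ug_acyclic (tadj C Ap Am x).
Proof.
move=> nd x _ [c [sc uc cc]].
case: c sc uc cc => [|v0 [|v1 rest]] // sc uc cc.
have e01 : tadj C Ap Am x v0 v1 by move: cc => /= /andP [].
have [j0 r0] : 'I_n * 'I_(p + m).
  move: e01; case E0: v0 => [[k|j]|i]; case F1: v1 => [[k'|j']|i'];
    rewrite /tadj /= => H;
    first [by exfalso | exact: (j, lshift m k') | exact: (j', lshift m k) | exact: (j, rshift p i') | exact: (j', rshift p i)].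
have [c' [sc' uc' cc' hc']] : exists c' : seq (tvert p n m),
    [/\ (3 <= size c')%N, uniq c', path.cycle (tadj C Ap Am x) c' & isColv (nth v0 c' 0)].
  case h0 : (isColv v0); first by exists [:: v0, v1 & rest].
  exists (rot 1 [:: v0, v1 & rest]); rewrite size_rot rot_uniq rot_cycle; split => //.
  by have := Halt e01; rewrite h0 /=; case: (isColv v1).
have [k [f [g [s [finj ginj s1 t1 t2]]]]] :=
  extract (@Halt R p m n C Ap Am x) (@Hsym R p m n C Ap Am x)
    (@Htight R p m n C Ap Am x r0 j0) (@Hcinj p m n j0) (@Hrinj p m n r0) uc' sc' cc' hc'.
have [hd hs] := core (@Hub R p m n C Ap Am x) s1 t1 t2.
exact: (nd k f g finj ginj hd hs).
Qed.
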